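(* Let $(X,|\cdot|)$ be a Euclidean plane and $\|\cdot\|$ a norm on $X$ with $\|\cdot\|\le|\cdot|$. Let $E$ be the unit ball of $|\cdot|$ and $B$ the unit ball of $\|\cdot\|$. Then $E$ is the John ellipse of $B$ if and only if there exist $v_0,v_1,v_2\in X$ with $|v_i|=\|v_i\|=1$ for $i=0,1,2$ and $\langle v_i,v_{i+1}\rangle\ge0$ for $i=0,1,2$, where $v_3:=-v_0$.
   Context: For a compact convex centrally symmetric set $B\subset\mathbb{R}^2$ with the origin in its interior, the John ellipse of $B$ is the unique ellipse of maximal area contained in $B$. $\langle\cdot,\cdot\rangle$ is the inner product inducing $|\cdot|$. *)

(* Defs.v *)
From HB Require Import structures.
From mathcomp Require Import all_boot all_order all_algebra.
From mathcomp Require Import reals.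
Set Implicit Arguments. Unset Strict Implicit. Unset Printing Implicit Defensive.
Import Order.TTheory GRing.Theory Num.Theory.
Local Open Scope ring_scope.

(* The Euclidean plane is modelled as R^2 = 'rV[R]_2 with the standard
   inner product. *)
Definition vec (R : realType) := 'rV[R]_2.

Definition inner (R : realType) (u v : vec R) : R := (u *m v^T) 0 0.

Definition enorm (R : realType) (u : vec R) : R := Num.sqrt (inner u u).

Definition is_norm (R : realType) (N : vec R -> R) : Prop :=
  (forall x, N x = 0 -> x = 0) /\
  (forall (a : R) x, N (a *: x) = `|a| * N x) /\
  (forall x y, N (x + y) <= N x + N y).

Definition eball (R : realType) : vec R -> Prop := fun x => enorm x <= 1.
Definition nball (R : realType) (N : vec R -> R) : vec R -> Prop :=
  fun x => N x <= 1.

Definition ellipse_set (R : realType) (A : 'M[R]_2) (c : vec R) : vec R -> Prop :=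
  fun x => exists2 u : vec R, enorm u <= 1 & x = u *m A + c.

(* Area of ellipse_set A c is pi * |det A|; comparing areas therefore
   amounts to comparing |det A|. *)
Definition ellipse_area_cmp (R : realType) (A : 'M[R]_2) : R := `|\det A|.

Definition subset_pred (T : Type) (P Q : T -> Prop) := forall x, P x -> Q x.

Definition is_John_ellipse (R : realType) (B E : vec R -> Prop) : Prop :=
  exists A : 'M[R]_2, exists c : vec R,
    [/\ A \in unitmx,
        (forall x, E x <-> ellipse_set A c x),
        subset_pred E B &
        forall (A' : 'M[R]_2) (c' : vec R), A' \in unitmx ->
          subset_pred (ellipse_set A' c') B ->
          ellipse_area_cmp A' <= ellipse_area_cmp A].

(* Main.v *)
Require Import Defs.
From HB Require Import structures.
From mathcomp Require Import all_boot all_order all_algebra.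
From mathcomp Require Import reals.
From mathcomp Require Import all_classical all_reals all_analysis.
From mathcomp Require Import ring lra.
Set Implicit Arguments. Unset Strict Implicit. Unset Printing Implicit Defensive.
Import Order.TTheory GRing.Theory Num.Theory.
Import numFieldNormedType.Exports.
Local Open Scope ring_scope.

Section Basic.
Variable R : realType.
Implicit Types u v x y : vec R.

Lemma sum2 (F : 'I_2 -> R) : \sum_(i < 2) F i = F 0 + F 1.
Proof. by rewrite big_ord_recr big_ord1 /=; congr (F _ + F _); apply/val_inj. Qed.

Lemma innerE u v : inner u v = u 0 0 * v 0 0 + u 0 1 * v 0 1.
Proof. by rewrite /inner !mxE sum2 !mxE. Qed.

Lemma enormE u : enorm u = Num.sqrt (u 0 0 ^+ 2 + u 0 1 ^+ 2).
Proof. by rewrite /enorm innerE !expr2. Qed.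

Definition mkv (a b : R) : vec R := \row_(j < 2) (if (j : nat) == 0%N then a else b).
Lemma mkv0 a b : mkv a b 0 0 = a. Proof. by rewrite mxE. Qed.
Lemma mkv1 a b : mkv a b 0 1 = b. Proof. by rewrite mxE. Qed.

Lemma vecP u v : u 0 0 = v 0 0 -> u 0 1 = v 0 1 -> u = v.
Proof.
move=> h0 h1; apply/rowP => j.
case: j => [[|[|//]] Hj].
- by rewrite (_ : Ordinal Hj = 0) //; apply/val_inj.
- by rewrite (_ : Ordinal Hj = 1) //; apply/val_inj.
Qed.

Lemma vecE u : u = mkv (u 0 0) (u 0 1).
Proof. by apply: vecP; rewrite ?mkv0 ?mkv1. Qed.

Lemma addv0 u v : (u + v) 0 0 = u 0 0 + v 0 0. Proof. by rewrite mxE. Qed.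
Lemma addv1 u v : (u + v) 0 1 = u 0 1 + v 0 1. Proof. by rewrite mxE. Qed.
Lemma scalev0 (a : R) u : (a *: u) 0 0 = a * u 0 0. Proof. by rewrite mxE. Qed.
Lemma scalev1 (a : R) u : (a *: u) 0 1 = a * u 0 1. Proof. by rewrite mxE. Qed.
Lemma oppv0 u : (- u) 0 0 = - u 0 0. Proof. by rewrite mxE. Qed.
Lemma oppv1 u : (- u) 0 1 = - u 0 1. Proof. by rewrite mxE. Qed.
Lemma subv0 u v : (u - v) 0 0 = u 0 0 - v 0 0. Proof. by rewrite !mxE. Qed.
Lemma subv1 u v : (u - v) 0 1 = u 0 1 - v 0 1. Proof. by rewrite !mxE. Qed.
Lemma mulv0 u (A : 'M[R]_2) : (u *m A) 0 0 = u 0 0 * A 0 0 + u 0 1 * A 1 0.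
Proof. by rewrite !mxE sum2. Qed.
Lemma mulv1 u (A : 'M[R]_2) : (u *m A) 0 1 = u 0 0 * A 0 1 + u 0 1 * A 1 1.
Proof. by rewrite !mxE sum2. Qed.

Lemma det2 (A : 'M[R]_2) : \det A = A 0 0 * A 1 1 - A 0 1 * A 1 0.
Proof.
rewrite (expand_det_row _ 0) sum2 /cofactor !det_mx11 !mxE /=.
rewrite !expr0 !expr1 /= !mul1r.
have -> : lift 0 (0 : 'I_1) = 1 :> 'I_2 by apply/val_inj.
have -> : lift 1 (0 : 'I_1) = 0 :> 'I_2 by apply/val_inj.
by rewrite mulN1r mulrN.
Qed.
End Basic.


Section Alg.
Variable R : realType.

Lemma sector (G H X1 Y1 X2 Y2 : R) : G < 0 -> 0 < X1 -> 0 < X2 ->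
  0 < - G * X1^+2 - 2 * H * X1 * Y1 + G * Y1^+2 ->
  0 < - G * X2^+2 - 2 * H * X2 * Y2 + G * Y2^+2 ->
  0 < X1 * X2 + Y1 * Y2.
Proof.
set Q1 := (- G * X1^+2 - 2 * H * X1 * Y1 + G * Y1^+2).
set Q2 := (- G * X2^+2 - 2 * H * X2 * Y2 + G * Y2^+2).
move=> hG hX1 hX2 hQ1 hQ2.
have id : (X1 * Y2 - X2 * Y1) * (X1 * X2 + Y1 * Y2) * (- G) = X2 * Y2 * Q1 - X1 * Y1 * Q2.
  by rewrite /Q1 /Q2; ring.
clearbody Q1 Q2.
have [hY1|hY1] := leP 0 Y1; have [hY2|hY2] := leP 0 Y2.
- nra.
- have a1 : X1 * Y2 < 0 by nra.
  have a2 : 0 <= X2 * Y1 by nra.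
  have a3 : X2 * Y2 < 0 by nra.
  have a4 : 0 <= X1 * Y1 by nra.
  have h2 : X2 * Y2 * Q1 - X1 * Y1 * Q2 < 0 by nra.
  have hK : (X1 * Y2 - X2 * Y1) * (- G) < 0 by nra.
  rewrite -id mulrAC in h2.
  by rewrite -(nmulr_rlt0 _ hK).
- have a1 : 0 <= X1 * Y2 by nra.
  have a2 : X2 * Y1 < 0 by nra.
  have a3 : 0 <= X2 * Y2 by nra.
  have a4 : X1 * Y1 < 0 by nra.
  have h2 : 0 < X2 * Y2 * Q1 - X1 * Y1 * Q2 by nra.
  have hK : 0 < (X1 * Y2 - X2 * Y1) * (- G) by nra.
  rewrite -id mulrAC in h2.
  by rewrite -(pmulr_rgt0 _ hK).
- nra.
Qed.

Lemma key_poly (G H X1 Y1 X2 Y2 : R) : G < 0 ->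
  (X1^+2 - Y1^+2) * G + 2 * X1 * Y1 * H < 0 ->
  (X2^+2 - Y2^+2) * G + 2 * X2 * Y2 * H < 0 ->
  0 <= X1 -> 0 <= X1 * X2 + Y1 * Y2 -> X2 <= 0 -> False.
Proof.
move=> hG h1 h2 hX1 hd hX2.
have hX1' : 0 < X1.
  rewrite lt_neqAle hX1 andbT; apply/eqP => e; rewrite -e in h1; nra.
have hX2' : X2 < 0.
  rewrite lt_neqAle hX2 andbT; apply/eqP => e; rewrite e in h2; nra.
have := @sector G H X1 Y1 (- X2) (- Y2) hG hX1'.
have -> : 0 < - X2 by rewrite oppr_gt0.
move=> /(_ isT).
have e1 : - G * X1^+2 - 2 * H * X1 * Y1 + G * Y1^+2 = - ((X1^+2 - Y1^+2) * G + 2 * X1 * Y1 * H) by ring.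
have e2 : - G * (- X2)^+2 - 2 * H * (- X2) * (- Y2) + G * (- Y2)^+2 = - ((X2^+2 - Y2^+2) * G + 2 * X2 * Y2 * H) by ring.
rewrite e1 e2 !oppr_gt0 => /(_ h1 h2).
have -> : X1 * - X2 + Y1 * - Y2 = - (X1 * X2 + Y1 * Y2) by ring.
rewrite oppr_gt0 => h; lra.
Qed.

Definition gq (al be x y : R) := al * (x^+2 - y^+2) + 2 * be * x * y.

Lemma key3 (al be a0 b0 x1 y1 x2 y2 : R) : a0^+2 + b0^+2 = 1 ->
  0 <= a0 * x1 + b0 * y1 -> 0 <= x1 * x2 + y1 * y2 -> a0 * x2 + b0 * y2 <= 0 ->
  0 <= gq al be a0 b0 \/ 0 <= gq al be x1 y1 \/ 0 <= gq al be x2 y2.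
Proof.
move=> hu h01 h12 h20.
have [g0|g0] := leP 0 (gq al be a0 b0); first by left.
have [g1|g1] := leP 0 (gq al be x1 y1); first by right; left.
have [g2|g2] := leP 0 (gq al be x2 y2); first by right; right.
exfalso.
pose X1 := x1 * a0 + y1 * b0; pose Y1 := x1 * b0 - y1 * a0.
pose X2 := x2 * a0 + y2 * b0; pose Y2 := x2 * b0 - y2 * a0.
pose H := 2 * al * a0 * b0 - be * (a0^+2 - b0^+2).
have ex1 : x1 = X1 * a0 + Y1 * b0.
  by rewrite /X1 /Y1; transitivity (x1 * (a0^+2 + b0^+2)); [rewrite hu mulr1|ring].
have ey1 : y1 = X1 * b0 - Y1 * a0.
  by rewrite /X1 /Y1; transitivity (y1 * (a0^+2 + b0^+2)); [rewrite hu mulr1|ring].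
have ex2 : x2 = X2 * a0 + Y2 * b0.
  by rewrite /X2 /Y2; transitivity (x2 * (a0^+2 + b0^+2)); [rewrite hu mulr1|ring].
have ey2 : y2 = X2 * b0 - Y2 * a0.
  by rewrite /X2 /Y2; transitivity (y2 * (a0^+2 + b0^+2)); [rewrite hu mulr1|ring].
have hg : forall X Y, gq al be (X * a0 + Y * b0) (X * b0 - Y * a0) =
   (X^+2 - Y^+2) * gq al be a0 b0 + 2 * X * Y * H.
  by move=> X Y; rewrite /gq /H; ring.
clearbody X1 Y1 X2 Y2 H.
subst x1 y1 x2 y2.
rewrite !hg in g1 g2.
apply: (@key_poly (gq al be a0 b0) H X1 Y1 X2 Y2) => //.
- have -> : X1 = a0 * (X1 * a0 + Y1 * b0) + b0 * (X1 * b0 - Y1 * a0).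
    by transitivity (X1 * (a0^+2 + b0^+2)); [rewrite hu mulr1|ring].
  done.
- have -> : X1 * X2 + Y1 * Y2 = (X1 * a0 + Y1 * b0) * (X2 * a0 + Y2 * b0) + (X1 * b0 - Y1 * a0) * (X2 * b0 - Y2 * a0).
    by transitivity ((X1 * X2 + Y1 * Y2) * (a0^+2 + b0^+2)); [rewrite hu mulr1|ring].
  done.
- have -> : X2 = a0 * (X2 * a0 + Y2 * b0) + b0 * (X2 * b0 - Y2 * a0).
    by transitivity (X2 * (a0^+2 + b0^+2)); [rewrite hu mulr1|ring].
  done.
Qed.

Lemma det_bound (a b c d x0 y0 x1 y1 x2 y2 : R) :
  x0^+2 + y0^+2 = 1 -> x1^+2 + y1^+2 = 1 -> x2^+2 + y2^+2 = 1 ->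
  0 <= x0 * x1 + y0 * y1 -> 0 <= x1 * x2 + y1 * y2 -> x0 * x2 + y0 * y2 <= 0 ->
  (a * x0 + b * y0)^+2 + (c * x0 + d * y0)^+2 <= 1 ->
  (a * x1 + b * y1)^+2 + (c * x1 + d * y1)^+2 <= 1 ->
  (a * x2 + b * y2)^+2 + (c * x2 + d * y2)^+2 <= 1 ->
  (a * d - b * c)^+2 <= 1.
Proof.
move=> u0 u1 u2 h01 h12 h20 q0 q1 q2.
pose p := a^+2 + c^+2; pose s := b^+2 + d^+2; pose r := a * b + c * d.
have hq : forall x y, x^+2 + y^+2 = 1 ->
    (a * x + b * y)^+2 + (c * x + d * y)^+2 = (p + s) / 2 + gq ((p - s) / 2) r x y.
  move=> x y hu.
  transitivity ((p + s) / 2 * (x^+2 + y^+2) + gq ((p - s) / 2) r x y).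
    by rewrite /gq /p /s /r; field.
  by rewrite hu mulr1.
have hT : (p + s) / 2 <= 1.
  have [g|[g|g]] := @key3 ((p - s) / 2) r x0 y0 x1 y1 x2 y2 u0 h01 h12 h20.
  - by move: q0; rewrite hq // => h; lra.
  - by move: q1; rewrite hq // => h; lra.
  - by move: q2; rewrite hq // => h; lra.
have hd : (a * d - b * c)^+2 = p * s - r^+2 by rewrite /p /s /r; ring.
have hp : 0 <= p by rewrite /p; nra.
have hs : 0 <= s by rewrite /s; nra.
rewrite hd.
have h1 : p * s <= ((p + s) / 2)^+2 by have := sqr_ge0 (p - s); lra.
have h2 : ((p + s) / 2)^+2 <= 1.
  have h0 : 0 <= (p + s) / 2 by lra.
  nra.
have := sqr_ge0 r; lra.
Qed.
End Alg.


Section Geo.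
Variable R : realType.
Implicit Types u v x y w : vec R.

Lemma enorm_ge0 u : 0 <= enorm u. Proof. exact: sqrtr_ge0. Qed.
Lemma enorm_sq u : enorm u ^+ 2 = u 0 0 ^+ 2 + u 0 1 ^+ 2.
Proof. by rewrite enormE sqr_sqrtr // addr_ge0 // sqr_ge0. Qed.

Lemma enorm_le1 u : enorm u <= 1 <-> u 0 0 ^+ 2 + u 0 1 ^+ 2 <= 1.
Proof.
rewrite -enorm_sq; split => h.
  by have := enorm_ge0 u; nra.
by have := enorm_ge0 u; nra.
Qed.

Lemma enorm_eq1 u : enorm u = 1 <-> u 0 0 ^+ 2 + u 0 1 ^+ 2 = 1.
Proof.
rewrite -enorm_sq; split => h; first by rewrite h expr1n.
have := enorm_ge0 u; nra.
Qed.

Variable N : vec R -> R.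
Hypothesis hN : is_norm N.

Lemma NZ (a : R) x : N (a *: x) = `|a| * N x. Proof. by case: hN => _ []. Qed.
Lemma Ntri x y : N (x + y) <= N x + N y. Proof. by case: hN => _ []. Qed.
Lemma N0 : N 0 = 0. Proof. by rewrite -(scale0r (0 : vec R)) NZ normr0 mul0r. Qed.
Lemma NN x : N (- x) = N x. Proof. by rewrite -scaleN1r NZ normrN normr1 mul1r. Qed.
Lemma N_ge0 x : 0 <= N x.
Proof. have := Ntri x (- x); rewrite subrr N0 NN; lra. Qed.

Hypothesis hle : forall x, N x <= enorm x.

Lemma support v x : enorm v = 1 -> N v = 1 -> inner x v <= N x.
Proof.
move=> /enorm_eq1 hv Nv.
set a := inner x v.
have [//|hlt] := leP a (N x).
exfalso.
set d := a - N x.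
have hd : 0 < d by rewrite /d; lra.
have hNx := N_ge0 x.
set k := x 0 0 ^+ 2 + x 0 1 ^+ 2 - a ^+ 2.
have hk : 0 <= k.
  rewrite /k /a innerE.
  have : (x 0 0 * v 0 1 - x 0 1 * v 0 0)^+2 >= 0 by apply: sqr_ge0.
  have e : x 0 0 ^+ 2 + x 0 1 ^+ 2 - (x 0 0 * v 0 0 + x 0 1 * v 0 1) ^+ 2 =
     (x 0 0 ^+ 2 + x 0 1 ^+ 2) * (1 - (v 0 0 ^+ 2 + v 0 1 ^+ 2)) + (x 0 0 * v 0 1 - x 0 1 * v 0 0)^+2 by ring.
  by rewrite e hv subrr mulr0 add0r.
set s := d / (k + 1).
have hs : 0 < s by rewrite /s divr_gt0 //; lra.
set w := (1 + s * a) *: v - s *: x.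
have hw : (1 + s * a) *: v = s *: x + w by rewrite /w addrCA subrr addr0.
have h1 : 1 + s * a <= s * N x + N w.
  have := Ntri (s *: x) w; rewrite -hw !NZ Nv mulr1 (gtr0_norm hs).
  rewrite ger0_norm //; have : 0 <= s * a by apply: mulr_ge0; lra.
  lra.
have h2 : N w <= enorm w := hle w.
have h3 : enorm w ^+ 2 = 1 + s ^+ 2 * k.
  rewrite enorm_sq /w !subv0 !subv1 !scalev0 !scalev1 /k /a innerE.
  transitivity ((1 + s * (x 0 0 * v 0 0 + x 0 1 * v 0 1)) ^+ 2 * (v 0 0 ^+ 2 + v 0 1 ^+ 2)
     - 2 * s * (1 + s * (x 0 0 * v 0 0 + x 0 1 * v 0 1)) * (x 0 0 * v 0 0 + x 0 1 * v 0 1)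
     + s ^+ 2 * (x 0 0 ^+ 2 + x 0 1 ^+ 2)); first by ring.
  by rewrite hv mulr1; ring.
have h4 : 1 + s * d <= enorm w by rewrite /d; lra.
have h5 : (1 + s * d) ^+ 2 <= 1 + s ^+ 2 * k.
  rewrite -h3; have : 0 <= 1 + s * d by have := mulr_gt0 hs hd; lra.
  nra.
have h6 : 2 * d <= s * k by nra.
have h7 : s * (k + 1) = d by rewrite /s mulfVK //; apply/lt0r_neq0; lra.
nra.
Qed.

Lemma support_abs v x : enorm v = 1 -> N v = 1 -> `|inner x v| <= N x.
Proof.
move=> h1 h2; have a := support x h1 h2; have b := support (- x) h1 h2.
rewrite NN innerE oppv0 oppv1 in b; rewrite innerE in a *.
rewrite ler_norml; lra.
Qed.
End Geo.


Section Ell.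
Variable R : realType.
Implicit Types u v x y w : vec R.

Lemma qbound (S : vec R -> Prop) (A : 'M[R]_2) (c : vec R) v :
  subset_pred (ellipse_set A c) S ->
  (forall x, S x -> `|inner x v| <= 1) ->
  (A 0 0 * v 0 0 + A 0 1 * v 0 1) ^+ 2 + (A 1 0 * v 0 0 + A 1 1 * v 0 1) ^+ 2 <= 1.
Proof.
move=> hsub hv.
set w := mkv (A 0 0 * v 0 0 + A 0 1 * v 0 1) (A 1 0 * v 0 0 + A 1 1 * v 0 1).
have hw : (A 0 0 * v 0 0 + A 0 1 * v 0 1) ^+ 2 + (A 1 0 * v 0 0 + A 1 1 * v 0 1) ^+ 2
   = enorm w ^+ 2 by rewrite enorm_sq /w mkv0 mkv1.
rewrite hw; set m := enorm w.
have hm0 : 0 <= m := enorm_ge0 w.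
have [m0|mpos] := eqVneq m 0; first by rewrite m0 expr0n /= ler01.
have hm : 0 < m by rewrite lt_neqAle eq_sym mpos.
set u := m^-1 *: w.
have hu : enorm u <= 1.
  apply/enorm_le1; rewrite /u !scalev0 !scalev1.
  have -> : (m^-1 * w 0 0) ^+ 2 + (m^-1 * w 0 1) ^+ 2 = m^-1 ^+ 2 * (w 0 0 ^+ 2 + w 0 1 ^+ 2) by ring.
  by rewrite -enorm_sq -/m -exprMn mulVf // expr1n.
have h1 := hv _ (hsub _ (ex_intro2 _ _ u hu erefl)).
have hu' : enorm (- u) <= 1 by apply/enorm_le1; rewrite oppv0 oppv1 !sqrrN; apply/enorm_le1.
have h2 := hv _ (hsub _ (ex_intro2 _ _ (- u) hu' erefl)).
have e : inner (u *m A + c) v - inner ((- u) *m A + c) v = 2 * m.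
  rewrite !innerE !addv0 !addv1 !mulv0 !mulv1 !oppv0 !oppv1 /u !scalev0 !scalev1 /w !mkv0 !mkv1.
  transitivity (2 * m^-1 * ((A 0 0 * v 0 0 + A 0 1 * v 0 1) ^+ 2 + (A 1 0 * v 0 0 + A 1 1 * v 0 1) ^+ 2)); first by ring.
  by rewrite hw expr2 mulrA mulrVK ?unitfE.
move: h1 h2; rewrite !ler_norml => h1 h2.
have hm1 : m <= 1 by lra.
nra.
Qed.

Lemma abs_le1 (d : R) : d ^+ 2 <= 1 -> `|d| <= 1.
Proof.
move=> h; rewrite -real_normK ?num_real in h; have := normr_ge0 d; nra.
Qed.

Lemma ell_det (S : vec R -> Prop) v0 v1 v2 :
  enorm v0 = 1 -> enorm v1 = 1 -> enorm v2 = 1 ->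
  0 <= inner v0 v1 -> 0 <= inner v1 v2 -> 0 <= inner v2 (- v0) ->
  (forall x, S x -> `|inner x v0| <= 1) ->
  (forall x, S x -> `|inner x v1| <= 1) ->
  (forall x, S x -> `|inner x v2| <= 1) ->
  forall (A : 'M[R]_2) c, subset_pred (ellipse_set A c) S -> `|\det A| <= 1.
Proof.
move=> /enorm_eq1 u0 /enorm_eq1 u1 /enorm_eq1 u2 h01 h12 h20 s0 s1 s2 A c hsub.
apply: abs_le1; rewrite det2.
rewrite !innerE oppv0 oppv1 in h01 h12 h20.
apply: (@det_bound _ _ _ _ _ (v0 0 0) (v0 0 1) (v1 0 0) (v1 0 1) (v2 0 0) (v2 0 1)) => //.
- lra.
- exact: qbound hsub s0.
- exact: qbound hsub s1.
- exact: qbound hsub s2.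
Qed.
End Ell.


Section Back.
Variable R : realType.
Implicit Types u v x y w : vec R.

Lemma eball_ellipse x : eball x <-> ellipse_set (1%:M : 'M[R]_2) 0 x.
Proof.
split => [h|[u hu ->]]; first by exists x => //; rewrite mulmx1 addr0.
by rewrite /eball mulmx1 addr0.
Qed.

Lemma dir_back (N : vec R -> R) : is_norm N -> (forall x, N x <= enorm x) ->
  forall v0 v1 v2,
  enorm v0 = 1 -> N v0 = 1 -> enorm v1 = 1 -> N v1 = 1 -> enorm v2 = 1 -> N v2 = 1 ->
  0 <= inner v0 v1 -> 0 <= inner v1 v2 -> 0 <= inner v2 (- v0) ->
  is_John_ellipse (nball N) (@eball R).
Proof.
move=> hN hle v0 v1 v2 e0 n0 e1 n1 e2 n2 h01 h12 h20.
exists 1%:M, 0; split.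
- exact: unitmx1.
- exact: eball_ellipse.
- by move=> x; rewrite /eball /nball => h; apply: le_trans (hle x) h.
- move=> A' c' _ hsub; rewrite /ellipse_area_cmp det1 normr1.
  have hs : forall v, enorm v = 1 -> N v = 1 -> forall x, nball N x -> `|inner x v| <= 1.
    by move=> v ev nv x hx; apply: le_trans (support_abs hN hle x ev nv) hx.
  exact: (ell_det e0 e1 e2 h01 h12 h20 (hs _ e0 n0) (hs _ e1 n1) (hs _ e2 n2) hsub).
Qed.

Lemma eball_det (A : 'M[R]_2) c : subset_pred (ellipse_set A c) (@eball R) -> `|\det A| <= 1.
Proof.
move=> hsub.
have u0 : enorm (mkv 1 0 : vec R) = 1 by apply/enorm_eq1; rewrite mkv0 mkv1; ring.
have u1 : enorm (mkv 0 1 : vec R) = 1 by apply/enorm_eq1; rewrite mkv0 mkv1; ring.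
have u2 : enorm (- mkv 1 0 : vec R) = 1 by apply/enorm_eq1; rewrite oppv0 oppv1 mkv0 mkv1; ring.
have hs : forall v, enorm v = 1 -> forall x, eball x -> `|inner x v| <= 1.
  move=> v /enorm_eq1 hv x /enorm_le1 hx.
  rewrite innerE; apply: abs_le1.
  have := sqr_ge0 (x 0 0 * v 0 1 - x 0 1 * v 0 0); nra.
apply: (ell_det u0 u1 u2 _ _ _ (hs _ u0) (hs _ u1) (hs _ u2) hsub).
- by rewrite innerE !mkv0 !mkv1; lra.
- by rewrite innerE !oppv0 !oppv1 !mkv0 !mkv1; lra.
- by rewrite innerE !oppv0 !oppv1 !mkv0 !mkv1; lra.
Qed.
End Back.


Section Cont.
Variable R : realType.

Lemma lip_cont (g : R -> R) (K : R) : 0 <= K ->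
  (forall s t, `|g s - g t| <= K * `|s - t|) -> continuous g.
Proof.
move=> K0 hg x; apply/cvgrPdist_le => e e0.
have e1 : 0 < e / (K + 1) by apply: divr_gt0 => //; lra.
have h : \forall t \near x, `|x - t| <= e / (K + 1).
  by apply: (@cvgr_dist_le _ _ _ _ _ id x cvg_id _ e1).
near=> t.
have ht : `|x - t| <= e / (K + 1).
  near: t. exact: h.
apply: le_trans (hg x t) _.
have -> : e = (K + 1) * (e / (K + 1)) by rewrite mulrC mulfVK //; apply/lt0r_neq0; lra.
have := normr_ge0 (x - t).
nra.
Unshelve. all: by end_near.
Qed.

Lemma evt_lip (g : R -> R) (K : R) : 0 <= K ->
  (forall s t, `|g s - g t| <= K * `|s - t|) ->
  exists2 c, -1 <= c <= 1 & forall t, -1 <= t <= 1 -> g t <= g c.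
Proof.
move=> K0 hg.
have cg := lip_cont K0 hg.
have h1 : -1 <= 1 :> R by lra.
have [c hc hmax] := EVT_max h1 (continuous_subspaceT cg).
exists c; first by move: hc; rewrite in_itv.
by move=> t ht; apply: hmax; rewrite in_itv.
Qed.
End Cont.


Section Circ.
Variable R : realType.
Implicit Types u v x y w : vec R.

Definition pp (t : R) : vec R := mkv ((1 - t^+2) / (1 + t^+2)) (2 * t / (1 + t^+2)).

Lemma den_pos (t : R) : 0 < 1 + t^+2.
Proof. have := sqr_ge0 t; lra. Qed.
Lemma den_neq0 (t : R) : 1 + t^+2 != 0.
Proof. exact/lt0r_neq0/den_pos. Qed.

Lemma pp_unit t : enorm (pp t) = 1.
Proof.
apply/enorm_eq1; rewrite /pp mkv0 mkv1.
by field; exact: den_neq0.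
Qed.

Lemma pp_lip s t : enorm (pp s - pp t) <= 2 * `|s - t|.
Proof.
have hs := den_pos s; have ht := den_pos t.
have e : enorm (pp s - pp t) ^+ 2 = 4 * (s - t) ^+ 2 / ((1 + s^+2) * (1 + t^+2)).
  rewrite enorm_sq /pp !subv0 !subv1 !mkv0 !mkv1.
  by field; rewrite ?den_neq0 ?mulf_neq0 ?den_neq0.
have hD : 1 <= (1 + s^+2) * (1 + t^+2) by have := sqr_ge0 s; have := sqr_ge0 t; nra.
have h2 : enorm (pp s - pp t) ^+ 2 <= (2 * `|s - t|) ^+ 2.
  rewrite e exprMn real_normK ?num_real // ler_pdivrMr; last by lra.
  have := sqr_ge0 (s - t); nra.
have := enorm_ge0 (pp s - pp t); have := normr_ge0 (s - t); nra.
Qed.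

Lemma pp_cover u : enorm u = 1 -> exists t, -1 <= t <= 1 /\ (pp t = u \/ pp t = - u).
Proof.
suff H : forall u, enorm u = 1 -> 0 <= u 0 0 -> exists t, -1 <= t <= 1 /\ pp t = u.
  move=> hu; have [h0|h0] := leP 0 (u 0 0).
    by have [t [ht e]] := H u hu h0; exists t; split => //; left.
  have hu' : enorm (- u) = 1 by move: hu; rewrite !enorm_eq1 oppv0 oppv1 !sqrrN.
  have [|t [ht e]] := H (- u) hu'; first by rewrite oppv0; lra.
  by exists t; split => //; right.
move=> {}u /enorm_eq1 hu h0.
have h1 : 0 < 1 + u 0 0 by lra.
have hb : u 0 1 ^+ 2 <= 1 by have := sqr_ge0 (u 0 0); lra.
exists (u 0 1 / (1 + u 0 0)); split.
  have hb' : `|u 0 1| <= 1 by apply: abs_le1.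
  rewrite -ler_norml normf_div (gtr0_norm h1) ler_pdivrMr // mul1r; lra.
have hn : 1 + u 0 0 != 0 by apply/lt0r_neq0.
have ht2 : (u 0 1 / (1 + u 0 0)) ^+ 2 = (1 - u 0 0) / (1 + u 0 0).
  rewrite expr_div_n; have -> : u 0 1 ^+ 2 = (1 - u 0 0) * (1 + u 0 0) by lra.
  by field.
apply: vecP; rewrite /pp ?mkv0 ?mkv1 ht2.
- by field; rewrite ?hn //; apply/lt0r_neq0; lra.
- by field; rewrite ?hn //; apply/lt0r_neq0; lra.
Qed.
End Circ.


Section Bnd.
Variable R : realType.
Implicit Types u v x y w : vec R.

Lemma le_sqr (a b : R) : 0 <= a -> 0 <= b -> a ^+ 2 <= b ^+ 2 -> a <= b.
Proof. move=> ha hb h; nra. Qed.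

Lemma coord0_le x : `|x 0 0| <= enorm x.
Proof.
apply: le_sqr; rewrite ?normr_ge0 ?enorm_ge0 // real_normK ?num_real // enorm_sq.
have := sqr_ge0 (x 0 1); lra.
Qed.
Lemma coord1_le x : `|x 0 1| <= enorm x.
Proof.
apply: le_sqr; rewrite ?normr_ge0 ?enorm_ge0 // real_normK ?num_real // enorm_sq.
have := sqr_ge0 (x 0 0); lra.
Qed.

Lemma enorm_l1 x : enorm x <= `|x 0 0| + `|x 0 1|.
Proof.
apply: le_sqr; rewrite ?enorm_ge0 ?addr_ge0 ?normr_ge0 // enorm_sq.
rewrite -(real_normK (num_real (x 0 0))) -(real_normK (num_real (x 0 1))).
have := normr_ge0 (x 0 0); have := normr_ge0 (x 0 1); nra.
Qed.

Lemma cs x y : `|inner x y| <= enorm x * enorm y.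
Proof.
apply: le_sqr; rewrite ?normr_ge0 ?mulr_ge0 ?enorm_ge0 // real_normK ?num_real //.
rewrite exprMn !enorm_sq innerE.
have := sqr_ge0 (x 0 0 * y 0 1 - x 0 1 * y 0 0); nra.
Qed.

Lemma enormZ (r : R) x : enorm (r *: x) = `|r| * enorm x.
Proof.
apply: le_anti; apply/andP; split; apply: le_sqr; rewrite ?mulr_ge0 ?normr_ge0 ?enorm_ge0 //;
  rewrite exprMn real_normK ?num_real // !enorm_sq !scalev0 !scalev1; nra.
Qed.

Definition hb (H : 'M[R]_2) := `|H 0 0| + `|H 0 1| + `|H 1 0| + `|H 1 1|.
Lemma hb_ge0 H : 0 <= hb H.
Proof. by rewrite /hb !addr_ge0 ?normr_ge0. Qed.

Lemma mulH_bound (H : 'M[R]_2) x : enorm (x *m H) <= hb H * enorm x.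
Proof.
apply: le_trans (enorm_l1 _) _; rewrite mulv0 mulv1.
have h0 := coord0_le x; have h1 := coord1_le x.
have a1 := ler_normD (x 0 0 * H 0 0) (x 0 1 * H 1 0).
have a2 := ler_normD (x 0 0 * H 0 1) (x 0 1 * H 1 1).
rewrite !normrM in a1 a2.
have := normr_ge0 (H 0 0); have := normr_ge0 (H 0 1); have := normr_ge0 (H 1 0);
  have := normr_ge0 (H 1 1).
rewrite /hb; nra.
Qed.

Definition phi (H : 'M[R]_2) u := inner (u *m H) u.

Lemma phiN H u : phi H (- u) = phi H u.
Proof. by rewrite /phi !innerE !mulv0 !mulv1 !oppv0 !oppv1; ring. Qed.

Lemma phi_lip H u w : enorm u = 1 -> enorm w = 1 ->
  `|phi H u - phi H w| <= 2 * hb H * enorm (u - w).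
Proof.
move=> hu hw.
have e : phi H u - phi H w = inner ((u - w) *m H) u + inner (w *m H) (u - w).
  by rewrite /phi !innerE !mulv0 !mulv1 !subv0 !subv1; ring.
rewrite e; apply: le_trans (ler_normD _ _) _.
have c1 := cs ((u - w) *m H) u; have c2 := cs (w *m H) (u - w).
have b1 := mulH_bound H (u - w); have b2 := mulH_bound H w.
rewrite hu in c1; rewrite hw in b2.
have := enorm_ge0 (u - w); have := enorm_ge0 (w *m H); have := hb_ge0 H; nra.
Qed.
End Bnd.


Section Pert.
Variable R : realType.
Implicit Types u v x y w : vec R.

Lemma circle_max (f : vec R -> R) (L : R) : 0 <= L ->
  (forall u, f (- u) = f u) ->
  (forall u w, enorm u = 1 -> enorm w = 1 -> `|f u - f w| <= L * enorm (u - w)) ->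
  (forall u, enorm u = 1 -> f u < 1) ->
  exists2 d, 0 < d & forall u, enorm u = 1 -> f u <= 1 - d.
Proof.
move=> L0 fN fL f1.
have hK : 0 <= L * 2 by lra.
have hl : forall s t, `|f (pp s) - f (pp t)| <= L * 2 * `|s - t|.
  move=> s t; apply: le_trans (fL _ _ (pp_unit s) (pp_unit t)) _.
  rewrite -mulrA ler_wpM2l //; exact: pp_lip.
have [c hc hmax] := @evt_lip R (fun t => f (pp t)) (L * 2) hK hl.
exists (1 - f (pp c)); first by have := f1 _ (pp_unit c); lra.
move=> u hu; have [t [ht [e|e]]] := pp_cover hu.
- by rewrite -e; have := hmax t ht; lra.
- by rewrite -(fN u) -e; have := hmax t ht; lra.
Qed.

Lemma min0_lip (a b : R) : `|Num.min 0 a - Num.min 0 b| <= `|a - b|.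
Proof.
have h1 := ler_norm (a - b); have h2 := ler_norm (b - a); rewrite distrC in h2.
rewrite !minEle; case: ifP => ha; case: ifP => hb; rewrite ler_norml;
  move: ha hb; rewrite ?real_leNgt ?num_real //; case: (ltP a 0); case: (ltP b 0) => //= *;
  apply/andP; split; lra.
Qed.

Variable N : vec R -> R.
Hypothesis hN : is_norm N.
Hypothesis hle : forall x, N x <= enorm x.

Lemma N_lip u w : `|N u - N w| <= enorm (u - w).
Proof.
apply: le_trans (hle (u - w)); rewrite ler_norml.
have h1 := Ntri hN (u - w) w; have h2 := Ntri hN (w - u) u.
rewrite subrK in h1; rewrite subrK in h2.
have e : N (w - u) = N (u - w) by rewrite -NN // opprB.
lra.
Qed.

Lemma enorm0 x : enorm x = 0 -> x = 0.
Proof.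
move=> h; have := enorm_sq x; rewrite h expr0n /= => e.
have h0 : x 0 0 = 0 by have := sqr_ge0 (x 0 0); have := sqr_ge0 (x 0 1); nra.
have h1 : x 0 1 = 0 by have := sqr_ge0 (x 0 0); have := sqr_ge0 (x 0 1); nra.
by apply: vecP; [rewrite h0 mxE | rewrite h1 mxE].
Qed.

Lemma perturb (H : 'M[R]_2) (eta : R) : 0 < eta -> 0 < H 0 0 + H 1 1 ->
  (forall u, enorm u = 1 -> N u = 1 -> phi H u <= - (2 * eta)) ->
  exists A' : 'M[R]_2, [/\ A' \in unitmx, subset_pred (ellipse_set A' 0) (nball N)
      & 1 < `|\det A'|].
Proof.
move=> eta0 htr hcon.
pose F u := N u + Num.min 0 (phi H u + eta).
have [d d0 hd] : exists2 d, 0 < d & forall u, enorm u = 1 -> F u <= 1 - d.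
  apply: (@circle_max F (1 + 2 * hb H)).
  - by have := hb_ge0 H; lra.
  - by move=> u; rewrite /F NN // phiN.
  - move=> u w hu hw; rewrite /F.
    have a1 := N_lip u w; have a2 := min0_lip (phi H u + eta) (phi H w + eta).
    have a3 := phi_lip H hu hw.
    have e : phi H u + eta - (phi H w + eta) = phi H u - phi H w by ring.
    rewrite e in a2.
    have a4 := ler_normD (N u - N w) (Num.min 0 (phi H u + eta) - Num.min 0 (phi H w + eta)).
    have e2 : N u + Num.min 0 (phi H u + eta) - (N w + Num.min 0 (phi H w + eta)) =
       (N u - N w) + (Num.min 0 (phi H u + eta) - Num.min 0 (phi H w + eta)) by ring.
    rewrite e2; lra.
  - move=> u hu; rewrite /F.
    have m0 : Num.min 0 (phi H u + eta) <= 0 by rewrite ge_min lexx.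
    have [hlt|hge] := ltP (N u) 1; first by lra.
    have hN1 : N u = 1 by apply: le_anti; rewrite hge -hu hle.
    have := hcon u hu hN1.
    have m1 : Num.min 0 (phi H u + eta) <= phi H u + eta by rewrite ge_min lexx orbT.
    lra.
set h := hb H.
have h0 : 0 <= h := hb_ge0 H.
set tr := H 0 0 + H 1 1.
set dH := H 0 0 * H 1 1 - H 0 1 * H 1 0.
set eps := Num.min (Num.min (d / (h + 1)) (2 * eta / (h ^+ 2 + 1))) (tr / (`|dH| + 1)).
have ep0 : 0 < eps.
  have q1 : 0 < d / (h + 1) by apply: divr_gt0; lra.
  have q2 : 0 < 2 * eta / (h ^+ 2 + 1) by apply: divr_gt0; have := sqr_ge0 h; lra.
  have q3 : 0 < tr / (`|dH| + 1) by apply: divr_gt0; rewrite /tr; have := normr_ge0 dH; lra.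
  by rewrite !lt_min q1 q2 q3.
have ep1 : eps * (h + 1) <= d.
  have : eps <= d / (h + 1) by rewrite /eps !ge_min lexx.
  by rewrite ler_pdivlMr //; lra.
have ep2 : eps * (h ^+ 2 + 1) <= 2 * eta.
  have : eps <= 2 * eta / (h ^+ 2 + 1) by rewrite /eps !ge_min lexx orbT.
  by rewrite ler_pdivlMr //; have := sqr_ge0 h; lra.
have ep3 : eps * (`|dH| + 1) <= tr.
  have : eps <= tr / (`|dH| + 1) by rewrite /eps !ge_min lexx orbT.
  by rewrite ler_pdivlMr //; have := normr_ge0 dH; lra.
set A' := 1%:M + eps *: H.
have hA : forall u, u *m A' = u + eps *: (u *m H).
  by move=> u; rewrite /A' mulmxDr mulmx1 scalemxAr.
have hdet : \det A' = 1 + eps * tr + eps ^+ 2 * dH.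
  rewrite det2 /A' !mxE /= /tr /dH; ring.
have hdet1 : 1 < \det A'.
  rewrite hdet.
  have a1 : - `|dH| <= dH by rewrite lerNl -normrN; exact: ler_norm.
  have a2 : eps ^+ 2 * (- `|dH|) <= eps ^+ 2 * dH by rewrite ler_wpM2l // sqr_ge0.
  have a3 : eps * eps <= eps * (tr - eps * `|dH|) by apply: (ler_wpM2l (ltW ep0)); lra.
  have a4 : 0 < eps * eps by apply: mulr_gt0.
  have e : eps * (tr - eps * `|dH|) = eps * tr + eps ^+ 2 * (- `|dH|) by ring.
  lra.
exists A'; split.
- by rewrite unitmxE unitfE; apply/lt0r_neq0; lra.
- have hunit : forall w, enorm w = 1 -> N (w *m A') <= 1.
    move=> w hw; rewrite hA.
    have bw : enorm (w *m H) <= h by have := mulH_bound H w; rewrite hw mulr1.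
    have [hp|hp] := leP (- eta) (phi H w).
    + have hF := hd w hw; rewrite /F in hF.
      have e0 : Num.min 0 (phi H w + eta) = 0 by rewrite minEle ifT //; lra.
      rewrite e0 addr0 in hF.
      apply: le_trans (Ntri hN _ _) _.
      rewrite NZ // (gtr0_norm ep0).
      have a1 : N (w *m H) <= h by apply: le_trans (hle _) bw.
      have a2 : eps * N (w *m H) <= eps * h by apply: (ler_wpM2l (ltW ep0)).
      lra.
    + apply: le_trans (hle _) _; apply: le_sqr; rewrite ?enorm_ge0 // expr1n.
      have e : enorm (w + eps *: (w *m H)) ^+ 2 = enorm w ^+ 2 + 2 * eps * phi H w + eps ^+ 2 * enorm (w *m H) ^+ 2.
        rewrite !enorm_sq /phi innerE !addv0 !addv1 !scalev0 !scalev1; ring.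
      rewrite e hw expr1n.
      have bw2 : enorm (w *m H) ^+ 2 <= h ^+ 2 by have := enorm_ge0 (w *m H); nra.
      have : eps * h ^+ 2 <= 2 * eta by nra.
      nra.
  move=> x [u hu ->]; rewrite addr0 /nball.
  have [u0|unz] := eqVneq u 0; first by rewrite u0 mul0mx N0.
  set r := enorm u.
  have r0 : 0 < r.
    rewrite lt_neqAle enorm_ge0 andbT eq_sym; apply/eqP => e.
    by move/eqP: unz; apply; apply: enorm0.
  have hw : enorm (r^-1 *: u) = 1 by rewrite enormZ ger0_norm ?invr_ge0 ?ltW // mulVf //; apply/lt0r_neq0.
  have -> : u = r *: (r^-1 *: u) by rewrite scalerA mulfV ?scale1r //; apply/lt0r_neq0.
  rewrite -scalemxAl NZ // (gtr0_norm r0).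
  have hr1 : r <= 1 := hu. have := hunit _ hw; have := N_ge0 hN ((r^-1 *: u) *m A'); nra.
- by rewrite gtr0_norm //; lra.
Qed.
End Pert.


Section Ext.
Variable R : realType.
Implicit Types u v x y w : vec R.
Variable N : vec R -> R.
Hypothesis hN : is_norm N.
Hypothesis hle : forall x, N x <= enorm x.

Lemma ext (g : R -> vec R) : (forall t, enorm (g t) = 1) ->
  (forall s t, enorm (g s - g t) <= 2 * `|s - t|) -> N (g 0) = 1 ->
  exists s, [/\ 0 <= s <= 1, N (g s) = 1 &
    forall t, 0 <= t <= 1 -> N (g t) = 1 -> t <= s].
Proof.
move=> gu gl g0.
pose Z : set R := fun t => 0 <= t <= 1 /\ N (g t) = 1.
have Z0 : Z 0 by split => //; rewrite lexx ler01.
have hs : has_sup Z by split; [exists 0 | exists 1 => t [/andP[_ ?] _]].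
have ub := sup_upper_bound hs.
have s0 : 0 <= sup Z by exact: ub.
have s1 : sup Z <= 1 by apply: ge_sup; [exists 0 | move=> t [/andP[_ ?] _]].
exists (sup Z); split.
- by rewrite s0 s1.
- apply: le_anti; rewrite (le_trans (hle _)) ?gu //=.
  rewrite leNgt; apply/negP => hlt.
  set dd := 1 - N (g (sup Z)).
  have dd0 : 0 < dd / 4 by rewrite /dd; lra.
  have [t [/andP[t0 t1] gt] ht] := sup_adherent dd0 hs.
  have tle : t <= sup Z by apply: ub; split => //; rewrite t0 t1.
  have l1 := N_lip hN hle (g t) (g (sup Z)).
  have l2 := gl t (sup Z).
  rewrite gt in l1.
  have : `|t - sup Z| = sup Z - t by rewrite distrC ger0_norm // subr_ge0.
  move=> e; rewrite e in l2.
  rewrite ler_norml in l1; move/andP: l1 => [l1 l1'].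
  rewrite /dd in dd0 ht; lra.
- by move=> t ht hg; apply: ub; split.
Qed.
End Ext.


Section Frame.
Variable R : realType.
Implicit Types u v x y w : vec R.

Definition Fr (v0 x : vec R) : vec R := x 0 0 *: v0 + x 0 1 *: mkv (- v0 0 1) (v0 0 0).

Lemma Fr0 v0 x : (Fr v0 x) 0 0 = x 0 0 * v0 0 0 - x 0 1 * v0 0 1.
Proof. by rewrite /Fr addv0 !scalev0 mkv0 mulrN. Qed.
Lemma Fr1 v0 x : (Fr v0 x) 0 1 = x 0 0 * v0 0 1 + x 0 1 * v0 0 0.
Proof. by rewrite /Fr addv1 !scalev1 mkv1. Qed.

Variable v0 : vec R.
Hypothesis hv0 : v0 0 0 ^+ 2 + v0 0 1 ^+ 2 = 1.

Lemma Fr_sub x y : Fr v0 x - Fr v0 y = Fr v0 (x - y).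
Proof. by apply: vecP; rewrite ?subv0 ?subv1 ?Fr0 ?Fr1 ?subv0 ?subv1; ring. Qed.

Lemma Fr_opp x : - Fr v0 x = Fr v0 (- x).
Proof. by apply: vecP; rewrite ?oppv0 ?oppv1 ?Fr0 ?Fr1 ?oppv0 ?oppv1; ring. Qed.

Lemma Fr_inner x y : inner (Fr v0 x) (Fr v0 y) = inner x y.
Proof.
rewrite !innerE !Fr0 !Fr1.
transitivity ((x 0 0 * y 0 0 + x 0 1 * y 0 1) * (v0 0 0 ^+ 2 + v0 0 1 ^+ 2)); first by ring.
by rewrite hv0 mulr1.
Qed.

Lemma Fr_enorm x : enorm (Fr v0 x) = enorm x.
Proof. by rewrite /enorm Fr_inner. Qed.

Lemma Fr10 : Fr v0 (mkv 1 0) = v0.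
Proof. by apply: vecP; rewrite ?Fr0 ?Fr1 ?mkv0 ?mkv1; ring. Qed.

Definition perp := mkv (- v0 0 1) (v0 0 0).

Lemma Fr_dec u : u = Fr v0 (mkv (inner u v0) (inner u perp)).
Proof.
apply: vecP; rewrite ?Fr0 ?Fr1 ?mkv0 ?mkv1 ?innerE /perp ?mkv0 ?mkv1.
- transitivity (u 0 0 * (v0 0 0 ^+ 2 + v0 0 1 ^+ 2)); first by rewrite hv0 mulr1.
  ring.
- transitivity (u 0 1 * (v0 0 0 ^+ 2 + v0 0 1 ^+ 2)); first by rewrite hv0 mulr1.
  ring.
Qed.
End Frame.

Section PP.
Variable R : realType.

Definition refl (x : vec R) := mkv (x 0 0) (- x 0 1).
Lemma refl_sub x y : refl x - refl y = refl (x - y).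
Proof. by apply: vecP; rewrite ?subv0 ?subv1 ?mkv0 ?mkv1 ?subv0 ?subv1; ring. Qed.
Lemma refl_enorm x : enorm (refl x) = enorm x.
Proof. by rewrite !enormE mkv0 mkv1 sqrrN. Qed.

Lemma pp0 : pp 0 = mkv 1 0 :> vec R.
Proof. by apply: vecP; rewrite /pp ?mkv0 ?mkv1 expr0n /= ?subr0 ?addr0 ?divr1 ?mulr0 ?mul0r. Qed.

Lemma pp_nonneg (t : R) : 0 <= t <= 1 -> 0 <= (pp t) 0 0 /\ 0 <= (pp t) 0 1.
Proof.
move=> /andP[t0 t1]; rewrite /pp mkv0 mkv1; have := den_pos t => d.
split; apply: divr_ge0; try lra; nra.
Qed.

Lemma pp_mono (t s : R) : 0 <= t -> t <= s -> (pp s) 0 0 <= (pp t) 0 0.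
Proof.
move=> t0 ts; rewrite /pp !mkv0; have := den_pos t; have := den_pos s => ds dt.
rewrite ler_pdivrMr // mulrAC ler_pdivlMr //; nra.
Qed.

Lemma pp_inv (X Y : R) : X ^+ 2 + Y ^+ 2 = 1 -> 0 <= X -> 0 <= Y ->
  0 <= Y / (1 + X) <= 1 /\ pp (Y / (1 + X)) = mkv X Y.
Proof.
move=> hu h0 hY.
have h1 : 0 < 1 + X by lra.
have hb : Y ^+ 2 <= 1 by have := sqr_ge0 X; lra.
split.
  rewrite divr_ge0 ?ler_pdivrMr //=; last by lra.
  have : `|Y| <= 1 by apply: abs_le1.
  rewrite ger0_norm //; lra.
have hn : 1 + X != 0 by apply/lt0r_neq0.
have ht2 : (Y / (1 + X)) ^+ 2 = (1 - X) / (1 + X).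
  rewrite expr_div_n; have -> : Y ^+ 2 = (1 - X) * (1 + X) by lra.
  by field.
apply: vecP; rewrite /pp ?mkv0 ?mkv1 ht2.
- by field; rewrite ?hn //; apply/lt0r_neq0; lra.
- by field; rewrite ?hn //; apply/lt0r_neq0; lra.
Qed.
End PP.


Section Final.
Variable R : realType.
Implicit Types u v x y w : vec R.

Lemma arc_ineq (X Y Xp Yp Xm Ym : R) :
  X ^+ 2 + Y ^+ 2 = 1 -> Xp ^+ 2 + Yp ^+ 2 = 1 -> Xm ^+ 2 + Ym ^+ 2 = 1 ->
  0 <= X -> 0 <= Xp -> 0 <= Yp -> 0 <= Xm -> 0 <= Ym ->
  (0 <= Y /\ Xp <= X) \/ (Y < 0 /\ Xm <= X) ->
  Xp * Xm - Yp * Ym <= (X * Xp + Y * Yp) * (X * Xm - Y * Ym).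
Proof.
move=> u up um hX hXp hYp hXm hYm hc.
have e : (X * Xp + Y * Yp) * (X * Xm - Y * Ym) - (Xp * Xm - Yp * Ym) =
   (X * Yp - Y * Xp) * (X * Ym + Y * Xm).
  transitivity ((X * Xp + Y * Yp) * (X * Xm - Y * Ym) - (X ^+ 2 + Y ^+ 2) * (Xp * Xm - Yp * Ym)).
    by rewrite u mul1r.
  ring.
suff : 0 <= (X * Yp - Y * Xp) * (X * Ym + Y * Xm) by lra.
case: hc => [[hY hx]|[hY hx]].
- have hYY : Y <= Yp.
    have : Y ^+ 2 <= Yp ^+ 2 by nra.
    nra.
  apply: mulr_ge0; nra.
- have hYY : - Y <= Ym.
    have : (- Y) ^+ 2 <= Ym ^+ 2 by nra.
    nra.
  apply: mulr_ge0; nra.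
Qed.

Lemma innerNr x y : inner x (- y) = - inner x y.
Proof. by rewrite !innerE !oppv0 !oppv1; ring. Qed.
Lemma innerNl x y : inner (- x) y = - inner x y.
Proof. by rewrite !innerE !oppv0 !oppv1; ring. Qed.

Lemma innerC x y : inner x y = inner y x.
Proof. by rewrite !innerE; ring. Qed.

Lemma enormN x : enorm (- x) = enorm x.
Proof. by rewrite !enormE oppv0 oppv1 !sqrrN. Qed.

Variable N : vec R -> R.
Hypothesis hN : is_norm N.
Hypothesis hle : forall x, N x <= enorm x.

Definition Hmat (c : R) (up um : vec R) : 'M[R]_2 :=
  \matrix_(i, j) ((3 * c / 4) * (i == j)%:R - (up 0 i * um 0 j + um 0 i * up 0 j) / 2).

Lemma phi_Hmat c up um u : phi (Hmat c up um) u =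
  (3 * c / 4) * (u 0 0 ^+ 2 + u 0 1 ^+ 2) - inner u up * inner u um.
Proof. by rewrite /phi !innerE mulv0 mulv1 /Hmat !mxE /= ?mulr1 ?mulr0; field. Qed.

Lemma tr_Hmat c up um : (Hmat c up um) 0 0 + (Hmat c up um) 1 1 = 3 * c / 2 - inner up um.
Proof. by rewrite /Hmat !mxE /= innerE ?mulr1 ?mulr0; field; rewrite ?pnatr_eq0. Qed.

Lemma no_triple :
  ~ (exists v0 v1 v2 : vec R,
    [/\ enorm v0 = 1 /\ N v0 = 1,
        enorm v1 = 1 /\ N v1 = 1,
        enorm v2 = 1 /\ N v2 = 1 &
        [/\ 0 <= inner v0 v1, 0 <= inner v1 v2 & 0 <= inner v2 (- v0)]]) ->
  exists (H : 'M[R]_2) (eta : R), [/\ 0 < eta, 0 < H 0 0 + H 1 1 &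
     forall u, enorm u = 1 -> N u = 1 -> phi H u <= - (2 * eta)].
Proof.
move=> notrip.
case: (boolp.pselect (exists v, enorm v = 1 /\ N v = 1)) => [[v0 [ev0 nv0]]|nocon]; last first.
  exists 1%:M, 1; split => //; first by rewrite !mxE /=; lra.
  by move=> u eu nu; exfalso; apply: nocon; exists u.
have hv0 : v0 0 0 ^+ 2 + v0 0 1 ^+ 2 = 1 by apply/enorm_eq1.
pose gp t := Fr v0 (pp t).
pose gm t := Fr v0 (refl (pp t)).
have gpu : forall t, enorm (gp t) = 1 by move=> t; rewrite /gp Fr_enorm // pp_unit.
have gmu : forall t, enorm (gm t) = 1 by move=> t; rewrite /gm Fr_enorm // refl_enorm pp_unit.
have gpl : forall s t, enorm (gp s - gp t) <= 2 * `|s - t|.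
  by move=> s t; rewrite /gp Fr_sub // Fr_enorm // pp_lip.
have gml : forall s t, enorm (gm s - gm t) <= 2 * `|s - t|.
  by move=> s t; rewrite /gm Fr_sub // refl_sub Fr_enorm // refl_enorm pp_lip.
have e10 : refl (mkv 1 0) = mkv 1 0 :> vec R.
  by apply: vecP; rewrite /refl ?mkv0 ?mkv1 ?oppr0.
have gp0 : N (gp 0) = 1 by rewrite /gp pp0 Fr10.
have gm0 : N (gm 0) = 1 by rewrite /gm pp0 e10 Fr10.
have [sp [/andP[sp0 sp1] Np maxp]] := ext hN hle gpu gpl gp0.
have [sm [/andP[sm0 sm1] Nm maxm]] := ext hN hle gmu gml gm0.
set Xp := (pp sp) 0 0; set Yp := (pp sp) 0 1.
set Xm := (pp sm) 0 0; set Ym := (pp sm) 0 1.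
have [hXp hYp] : 0 <= Xp /\ 0 <= Yp by apply: pp_nonneg; rewrite sp0 sp1.
have [hXm hYm] : 0 <= Xm /\ 0 <= Ym by apply: pp_nonneg; rewrite sm0 sm1.
have up1 : Xp ^+ 2 + Yp ^+ 2 = 1 by apply/enorm_eq1; exact: pp_unit.
have um1 : Xm ^+ 2 + Ym ^+ 2 = 1 by apply/enorm_eq1; exact: pp_unit.
set up := gp sp; set um := gm sm.
have iupum : inner up um = Xp * Xm - Yp * Ym.
  by rewrite /Xp /Xm /Yp /Ym /up /um /gp /gm Fr_inner // innerE /refl mkv0 mkv1; ring.
have iv0up : inner v0 up = Xp.
  by rewrite /Xp /up /gp -{1}(Fr10 v0) Fr_inner // innerE !mkv0 mkv1; ring.
have iv0um : inner v0 um = Xm.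
  by rewrite /Xm /um /gm -{1}(Fr10 v0) Fr_inner // innerE /refl !mkv0 !mkv1; ring.
set c := Xp * Xm - Yp * Ym.
have [cle|cgt] := leP c 0.
  exfalso; apply: notrip; exists v0, up, (- um); split.
  - by split.
  - by split => //; exact: gpu.
  - by split; [rewrite enormN; exact: gmu | rewrite NN].
  - split.
    + by rewrite iv0up.
    + by rewrite innerNr oppr_ge0 iupum.
    + by rewrite innerNl innerNr opprK innerC iv0um.
have key : forall u, enorm u = 1 -> N u = 1 -> 0 <= inner u v0 ->
    c <= inner u up * inner u um.
  move=> u eu nu hX0.
  have hd := Fr_dec hv0 u.
  move: hd hX0 eu; set X := inner u v0; set Y := inner u (perp v0) => hd hX0 eu.
  have hXY : X ^+ 2 + Y ^+ 2 = 1.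
    by move: eu; rewrite hd Fr_enorm // => /enorm_eq1; rewrite mkv0 mkv1.
  have iup : inner u up = X * Xp + Y * Yp.
    by rewrite hd /up /gp Fr_inner // innerE mkv0 mkv1 /Xp /Yp.
  have ium : inner u um = X * Xm - Y * Ym.
    by rewrite hd /um /gm Fr_inner // innerE /refl /Xm /Ym /pp ?mkv0 ?mkv1; ring.
  rewrite iup ium /c.
  apply: arc_ineq => //.
  have [hY|hY] := leP 0 Y.
  - left; split => //.
    have [ht ppt] := pp_inv hXY hX0 hY.
    have gt : gp (Y / (1 + X)) = u by rewrite /gp ppt -hd.
    have := maxp _ ht; rewrite gt => /(_ nu) tle.
    have := pp_mono (proj1 (andP ht)) tle; rewrite ppt mkv0.
    by rewrite /Xp.
  - right; split => //.
    have hXY' : X ^+ 2 + (- Y) ^+ 2 = 1 by rewrite sqrrN.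
    have hY' : 0 <= - Y by lra.
    have [ht ppt] := pp_inv hXY' hX0 hY'.
    have gt : gm (- Y / (1 + X)) = u.
      rewrite /gm ppt hd; congr Fr.
      by apply: vecP; rewrite /refl ?mkv0 ?mkv1 ?opprK.
    have := maxm _ ht; rewrite gt => /(_ nu) tle.
    have := pp_mono (proj1 (andP ht)) tle; rewrite ppt mkv0.
    by rewrite /Xm.
exists (Hmat c up um), (c / 8); split.
- lra.
- by rewrite tr_Hmat iupum -/c; lra.
- move=> u eu nu; rewrite phi_Hmat.
  have u1 : u 0 0 ^+ 2 + u 0 1 ^+ 2 = 1 by apply/enorm_eq1.
  have hP : c <= inner u up * inner u um.
    have [h|h] := leP 0 (inner u v0); first exact: key.
    have := key (- u); rewrite enormN NN // innerNl !innerNl mulrNN; apply => //.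
    lra.
  rewrite u1 mulr1; lra.
Qed.
End Final.



Unset Implicit Arguments.
Theorem theorem2p1 (R : realType) (N : vec R -> R) :
  is_norm N ->
  (forall x : vec R, N x <= enorm x) ->
  is_John_ellipse (nball N) (@eball R) <->
  exists v0 v1 v2 : vec R,
    [/\ enorm v0 = 1 /\ N v0 = 1,
        enorm v1 = 1 /\ N v1 = 1,
        enorm v2 = 1 /\ N v2 = 1 &
        [/\ 0 <= inner v0 v1, 0 <= inner v1 v2 & 0 <= inner v2 (- v0)]].
Proof.
move=> hN hle; split.
- move=> [A0 [c0 [hA0 hE hsub hmax]]].
  case: (boolp.pselect (exists v0 v1 v2 : vec R,
    [/\ enorm v0 = 1 /\ N v0 = 1,
        enorm v1 = 1 /\ N v1 = 1,
        enorm v2 = 1 /\ N v2 = 1 &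
        [/\ 0 <= inner v0 v1, 0 <= inner v1 v2 & 0 <= inner v2 (- v0)]])) => // hno.
  exfalso.
  have [H [eta [eta0 htr hcon]]] := no_triple hN hle hno.
  have [A' [uA' sA' dA']] := perturb hN hle eta0 htr hcon.
  have h1 := hmax A' 0 uA' sA'.
  have h2 : `|\det A0| <= 1 by apply: (@eball_det _ A0 c0) => x hx; apply/hE.
  rewrite /ellipse_area_cmp in h1; lra.
- move=> [v0 [v1 [v2 [[e0 n0] [e1 n1] [e2 n2] [h01 h12 h20]]]]].
  exact: (dir_back hN hle e0 n0 e1 n1 e2 n2 h01 h12 h20).
Qed.
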